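(* Let $M\ge2$ be an integer and let $\varepsilon$ be a real number with $0<\varepsilon<1$. Let $\alpha=[0;a_1,a_2,\ldots]$ be a real number whose partial quotients $a_i$ are all at most $M$. For each positive integer $n$, let $\overline{A}_n$ denote the finite word $a_na_{n-1}\ldots a_1$. Let $(t_i)_{i\ge1}$ be any sequence with values in $\{M+1,M+2\}$ and let $(n_i)_{i\ge1}$ be any sequence of positive integers satisfying $$\liminf_{i\to+\infty}\frac{n_{i+1}}{n_i} > \frac{4\log(M+3)}{\varepsilon\log 2}.$$ Set $$\beta=[0;\overline{A}_{n_1},t_1,\overline{A}_{n_2},t_2,\overline{A}_{n_3},t_3,\ldots],$$ i.e. the continued fraction whose sequence of partial quotients is $a_{n_1},\ldots,a_1,t_1,a_{n_2},\ldots,a_1,t_2,a_{n_3},\ldots,a_1,t_3,\ldots$. Then $1,\alpha,\beta$ are linearly independent over $\mathbb{Q}$, and there exist infinitely many positive integers $q$ such that $$q\cdot\Vert q\alpha\Vert\cdot\Vert q\beta\Vert\le\frac{1}{q^{1-\varepsilon}}.$$ In particular, $\inf_{q\ge1} q\cdot\Vert q\alpha\Vert\cdot\Vert q\beta\Vert=0$.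
   Context: For a real number $x$, $\Vert x\Vert$ denotes the distance from $x$ to the nearest integer. $[0;b_1,b_2,\ldots]$ denotes the simple continued fraction with partial quotients $b_1,b_2,\ldots$ (positive integers). *)

(* Defs.v *)
From Stdlib Require Import Reals Lra List QArith Qreals.
From Coquelicot Require Import Coquelicot.
Import ListNotations.
Open Scope R_scope.

Definition dist_int (x : R) : R := Rmin (frac_part x) (1 - frac_part x).

Fixpoint cf_fin (l : list nat) : R :=
  match l with
  | nil => 0
  | b :: l' => 1 / (INR b + cf_fin l')
  end.

Definition convergent (b : nat -> nat) (n : nat) : R :=
  cf_fin (map b (seq 1 n)).

Definition is_cf_value (b : nat -> nat) (x : R) : Prop :=
  Un_cv (convergent b) x.

Definition rev_word (a : nat -> nat) (m : nat) : list nat :=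
  map a (rev (seq 1 m)).

Definition beta_block (a t ns : nat -> nat) (i : nat) : list nat :=
  rev_word a (ns i) ++ [t i].

(* k-th partial quotient (k >= 1) of
   [0; \overline{A}_{n_1}, t_1, \overline{A}_{n_2}, t_2, ...].
   Each block is nonempty, so the first k blocks contain at least k letters. *)
Definition beta_pq (a t ns : nat -> nat) (k : nat) : nat :=
  nth (k - 1) (concat (map (beta_block a t ns) (seq 1 k))) 0%nat.

(* Main.v *)
Require Import Defs.
From Stdlib Require Import Reals Lra Lia List QArith Qreals.
From Coquelicot Require Import Coquelicot.
Import ListNotations.
Open Scope R_scope.


Definition M4 := (nat*nat*nat*nat)%type.
Definition mmul (m1 m2 : M4) : M4 :=
  let '(a,b,c,d) := m1 in let '(e,f,g,h) := m2 in
  ((a*e+b*g), (a*f+b*h), (c*e+d*g), (c*f+d*h))%nat.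
Fixpoint mk (l : list nat) : M4 :=
  match l with nil => (1,0,0,1)%nat | x :: l' => mmul (x,1,1,0)%nat (mk l') end.
Definition tr (m:M4) : M4 := let '(a,b,c,d) := m in (a,c,b,d).

Lemma mmul_assoc m1 m2 m3 : mmul m1 (mmul m2 m3) = mmul (mmul m1 m2) m3.
Proof.
  destruct m1 as [[[a b] c] d]; destruct m2 as [[[e f] g] h];
  destruct m3 as [[[i j] k] l]; simpl; f_equal; [f_equal; [f_equal|]|]; ring.
Qed.

Lemma mmul_id m : mmul (1,0,0,1)%nat m = m.
Proof. destruct m as [[[a b] c] d]; simpl; f_equal; [f_equal; [f_equal|]|]; ring. Qed.
Lemma mmul_idr m : mmul m (1,0,0,1)%nat = m.
Proof. destruct m as [[[a b] c] d]; simpl; f_equal; [f_equal; [f_equal|]|]; ring. Qed.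

Lemma mk_app l1 l2 : mk (l1 ++ l2) = mmul (mk l1) (mk l2).
Proof.
  induction l1 as [|x l1 IH].
  - change (mk l2 = mmul (1,0,0,1)%nat (mk l2)). now rewrite mmul_id.
  - change (mmul (x,1,1,0)%nat (mk (l1 ++ l2)) = mmul (mmul (x,1,1,0)%nat (mk l1)) (mk l2)).
    rewrite IH, mmul_assoc; reflexivity.
Qed.

Lemma tr_mmul m1 m2 : tr (mmul m1 m2) = mmul (tr m2) (tr m1).
Proof.
  destruct m1 as [[[a b] c] d]; destruct m2 as [[[e f] g] h]; simpl;
  f_equal; [f_equal; [f_equal|]|]; ring.
Qed.

Lemma mk_rev l : mk (rev l) = tr (mk l).
Proof.
  induction l as [|x l IH]. reflexivity.
  change (mk (rev l ++ [x]) = tr (mmul (x,1,1,0)%nat (mk l))).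
  rewrite mk_app, IH, tr_mmul. change (mk [x]) with (mmul (x,1,1,0)%nat (1,0,0,1)%nat).
  rewrite mmul_idr. reflexivity.
Qed.

Lemma mk_cons x l : mk (x :: l) =
  let '(a,b,c,d) := mk l in ((x*a+c), (x*b+d), a, b)%nat.
Proof. simpl. destruct (mk l) as [[[a b] c] d]. simpl. f_equal; [f_equal; [f_equal|]|]; ring. Qed.

Lemma mk_snoc l x : mk (l ++ [x]) =
  let '(a,b,c,d) := mk l in ((a*x+b), a, (c*x+d), c)%nat.
Proof. rewrite mk_app. simpl. destruct (mk l) as [[[a b] c] d]. simpl. f_equal; [f_equal; [f_equal|]|]; ring. Qed.

Definition ma (m : M4) := let '(a,b,c,d) := m in a.
Definition mb (m : M4) := let '(a,b,c,d) := m in b.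
Definition mc (m : M4) := let '(a,b,c,d) := m in c.
Definition md (m : M4) := let '(a,b,c,d) := m in d.

Lemma mk_det l : INR (ma (mk l)) * INR (md (mk l)) - INR (mb (mk l)) * INR (mc (mk l)) = (-1)^(length l).
Proof.
  induction l as [|x l IH]. simpl; lra.
  rewrite mk_cons. destruct (mk l) as [[[a b] c] d]. cbn [ma mb mc md length pow] in *.
  rewrite !plus_INR, !mult_INR. rewrite <- IH. ring.
Qed.

Definition pos1 (l : list nat) := List.Forall (fun x => (1 <= x)%nat) l.

Lemma mk_a_pos l : pos1 l -> (1 <= ma (mk l))%nat.
Proof.
  induction 1 as [|x l Hx Hl IH]. simpl; lia.
  rewrite mk_cons. destruct (mk l) as [[[a b] c] d]. simpl in *. nia.
Qed.

Lemma mk_ineq l : pos1 l -> l <> nil ->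
  let '(a,b,c,d) := mk l in (b <= a /\ d <= c /\ c <= a /\ d <= b /\ 1 <= a)%nat.
Proof.
  induction 1 as [|x l Hx Hl IH]; intros Hne. congruence.
  rewrite mk_cons. destruct l as [|y l'].
  - simpl. lia.
  - specialize (IH ltac:(congruence)). destruct (mk (y :: l')) as [[[a b] c] d]. nia.
Qed.

Lemma mk_bound l K : List.Forall (fun x => (x <= K)%nat) l ->
  let '(a,b,c,d) := mk l in
  (INR a <= INR (K+1)^(length l) /\ INR b <= INR (K+1)^(length l) /\
   INR c <= INR (K+1)^(length l) /\ INR d <= INR (K+1)^(length l)).
Proof.
  induction 1 as [|x l Hx Hl IH]. simpl; lra.
  rewrite mk_cons. cbn [length pow]. destruct (mk l) as [[[a b] c] d].
  set (P := INR (K+1) ^ length l) in *.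
  assert (0 <= P) by (apply pow_le; apply pos_INR).
  apply le_INR in Hx. rewrite plus_INR in *. 
  rewrite !plus_INR, !mult_INR. destruct IH as (H1 & H2 & H3 & H4).
  pose proof (pos_INR a); pose proof (pos_INR b); pose proof (pos_INR x).
  assert (INR x * INR a <= INR K * P) by (apply Rmult_le_compat; lra).
  assert (INR x * INR b <= INR K * P) by (apply Rmult_le_compat; lra).
  simpl INR. repeat split; nra.
Qed.


Fixpoint cfz (l : list nat) (z : R) : R :=
  match l with nil => z | x :: l' => 1 / (INR x + cfz l' z) end.

Lemma cf_fin_app l r : cf_fin (l ++ r) = cfz l (cf_fin r).
Proof. induction l as [|x l IH]; simpl; auto. now rewrite IH. Qed.

Definition mob (m : M4) (z : R) : R :=
  let '(a,b,c,d) := m in (INR c + INR d * z) / (INR a + INR b * z).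

Lemma cfz_mob l z : pos1 l -> 0 <= z -> cfz l z = mob (mk l) z /\ 0 <= cfz l z.
Proof.
  intros Hl Hz. induction Hl as [|x l Hx Hl IH].
  - simpl. split; [field|lra].
  - destruct IH as [IH1 IH2]. pose proof (mk_a_pos l Hl) as Ha.
    cbn [cfz]. rewrite mk_cons. rewrite IH1 in *. unfold mob in *.
    destruct (mk l) as [[[a b] c] d]. cbn [ma] in Ha.
    apply le_INR in Ha, Hx. simpl INR in Ha, Hx.
    pose proof (pos_INR b). pose proof (pos_INR c). pose proof (pos_INR d).
    assert (0 < INR a + INR b * z) by nra.
    rewrite !plus_INR, !mult_INR. split.
    + field. split; [|lra].
      assert (0 < INR x + (INR c + INR d * z) / (INR a + INR b * z)) by lra. 
      intro Hz0. 
      assert (Heq : INR x + (INR c + INR d * z) / (INR a + INR b * z) = (INR x * INR a + INR c + (INR x * INR b + INR d) * z) / (INR a + INR b * z)) by (field; lra).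
      rewrite Hz0 in Heq. unfold Rdiv in Heq. rewrite Rmult_0_l in Heq. lra.
    + apply Rlt_le. apply Rdiv_lt_0_compat; lra.
Qed.

Definition natb (lo hi : nat) (l : list nat) := List.Forall (fun x => (lo <= x <= hi)%nat) l.

Lemma cf_fin_01 l : pos1 l -> 0 <= cf_fin l <= 1.
Proof.
  induction 1 as [|x l Hx Hl IH]; simpl. lra.
  apply le_INR in Hx. simpl INR in Hx. split.
  - apply Rlt_le, Rdiv_lt_0_compat; lra.
  - unfold Rdiv. rewrite Rmult_1_l. rewrite <- Rinv_1. apply Rinv_le_contravar; lra.
Qed.

Lemma natb_pos1 lo hi l : (1 <= lo)%nat -> natb lo hi l -> pos1 l.
Proof. intros H. induction 1; constructor; auto; lia. Qed.

Lemma cf_fin_cons_bounds x l lo hi : pos1 l -> (1 <= lo)%nat -> (lo <= x <= hi)%nat ->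
  1 / (INR hi + 1) <= cf_fin (x :: l) <= 1 / INR lo.
Proof.
  intros Hl H1 Hx. pose proof (cf_fin_01 l Hl). simpl cf_fin.
  destruct Hx as [Hx1 Hx2]. apply le_INR in Hx1, Hx2, H1. simpl INR in H1.
  split; apply Rmult_le_compat_l; try lra; apply Rinv_le_contravar; lra.
Qed.

Lemma cf_fin_3 (M : nat) x y l : (1 <= M)%nat -> natb 1 M l -> l <> nil ->
  (1 <= x <= M)%nat -> (1 <= y <= M)%nat ->
  1 / (INR M + (INR M + 1) / (INR M + 2)) <= cf_fin (x :: y :: l).
Proof.
  intros HM Hl Hne Hx Hy. destruct l as [|w l']. congruence.
  inversion Hl; subst.
  pose proof (cf_fin_cons_bounds w l' 1 M ltac:(eapply natb_pos1; [|eauto]; lia) ltac:(lia) ltac:(auto)) as Hw.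
  set (v := cf_fin (w :: l')) in *.
  change (cf_fin (x :: y :: w :: l')) with (1 / (INR x + 1 / (INR y + v))).
  destruct Hx as [Hx0 Hx]. destruct Hy as [Hy _]. apply le_INR in Hx0, Hx, Hy, HM. simpl INR in *.
  assert (0 < INR M + 1) by lra.
  assert (Hv : 1/(INR M + 1) <= v) by lra.
  assert (0 < 1/(INR M+1)) by (apply Rdiv_lt_0_compat; lra).
  assert (Hyv : 1 / (INR y + v) <= (INR M + 1)/(INR M + 2)).
  { apply (Rle_trans _ (1 / (1 + 1/(INR M + 1)))).
    - apply Rmult_le_compat_l; [lra|]. apply Rinv_le_contravar; [|lra].
      assert (0 < 1/(INR M+1)) by (apply Rdiv_lt_0_compat; lra). lra.
    - right. field. lra. }
  assert (0 < 1 / (INR y + v)) by (apply Rdiv_lt_0_compat; lra).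
  apply Rmult_le_compat_l; [lra|]. apply Rinv_le_contravar; [lra|].
  assert (0 < (INR M + 1) / (INR M + 2)) by (apply Rdiv_lt_0_compat; lra).
  lra.
Qed.


Lemma abs_pm1 (x : R) : Rabs x = 1 -> forall y, Rabs (x * y) = Rabs y.
Proof. intros H y. rewrite Rabs_mult, H. ring. Qed.

Lemma alpha_est (A B a b c d : nat) (z rho m1 : R) :
  Rabs (INR a * INR d - INR b * INR c) = 1 ->
  (b <= a)%nat -> (1 <= a)%nat -> 0 < m1 -> m1 * INR B <= INR A ->
  rho <= z <= 1 -> 1 / m1 <= rho ->
  Rabs (INR (A*a + B*b) * mob (a,b,c,d) z - INR (A*c+B*d)) <= INR A / INR a /\
  (rho - 1/m1) * INR A / (2 * INR a) <= Rabs (INR (A*a + B*b) * mob (a,b,c,d) z - INR (A*c+B*d)).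
Proof.
  intros Hdet Hba Ha Hm1 HAB Hz Hrho. unfold mob.
  apply le_INR in Hba, Ha. simpl INR in Ha.
  pose proof (pos_INR A); pose proof (pos_INR B); pose proof (pos_INR b).
  assert (0 < 1/m1) by (apply Rdiv_lt_0_compat; lra).
  assert (Hden : INR a <= INR a + INR b * z <= 2 * INR a) by nra.
  assert (E : INR (A*a + B*b) * ((INR c + INR d * z) / (INR a + INR b * z)) - INR (A*c+B*d)
     = (INR a * INR d - INR b * INR c) * ((INR A * z - INR B) / (INR a + INR b * z))).
  { rewrite !plus_INR, !mult_INR. field. lra. }
  rewrite E, (abs_pm1 _ Hdet).
  assert (HB : INR B <= INR A / m1) by (apply (Rmult_le_reg_l m1); [lra|]; field_simplify; lra).
  assert (Hr : (rho - 1/m1) * INR A <= INR A * z - INR B).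
  { assert (INR A / m1 = 1/m1 * INR A) by (field; lra). nra. }
  assert (0 <= (rho - 1/m1) * INR A) by (apply Rmult_le_pos; lra).
  rewrite Rabs_pos_eq by (apply Rmult_le_pos; [lra|]; left; apply Rinv_0_lt_compat; lra).
  split.
  - apply (Rle_trans _ ((INR A * z - INR B) / INR a)).
    + unfold Rdiv. apply Rmult_le_compat_l; [lra|]. apply Rinv_le_contravar; lra.
    + unfold Rdiv. apply Rmult_le_compat_r; [left; apply Rinv_0_lt_compat; lra|]. nra.
  - apply (Rle_trans _ ((INR A * z - INR B) / (2 * INR a))).
    + unfold Rdiv. apply Rmult_le_compat_r; [left; apply Rinv_0_lt_compat; lra|]. lra.
    + unfold Rdiv. apply Rmult_le_compat_l; [lra|]. apply Rinv_le_contravar; lra.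
Qed.

Lemma beta_est (q q' P P' : nat) (z lo hi : R) :
  Rabs (INR q * INR P' - INR q' * INR P) = 1 ->
  (q' <= q)%nat -> (1 <= q)%nat -> 0 < lo -> lo <= z <= hi -> hi <= 1 ->
  lo / (2 * INR q) <= Rabs (INR q * mob (q,q',P,P') z - INR P) <= hi / INR q.
Proof.
  intros Hdet Hq' Hq Hlo Hz Hhi. unfold mob.
  apply le_INR in Hq', Hq. simpl INR in Hq. pose proof (pos_INR q').
  assert (Hden : INR q <= INR q + INR q' * z <= 2 * INR q) by nra.
  assert (E : INR q * ((INR P + INR P' * z) / (INR q + INR q' * z)) - INR P
     = (INR q * INR P' - INR q' * INR P) * (z / (INR q + INR q' * z))).
  { field. lra. }
  rewrite E, (abs_pm1 _ Hdet).
  rewrite Rabs_pos_eq by (apply Rmult_le_pos; [lra|]; left; apply Rinv_0_lt_compat; lra).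
  split.
  - apply (Rle_trans _ (lo / (INR q + INR q' * z))).
    + unfold Rdiv. apply Rmult_le_compat_l; [lra|]. apply Rinv_le_contravar; lra.
    + unfold Rdiv. apply Rmult_le_compat_r; [left; apply Rinv_0_lt_compat; lra|]. lra.
  - apply (Rle_trans _ (z / INR q)).
    + unfold Rdiv. apply Rmult_le_compat_l; [lra|]. apply Rinv_le_contravar; lra.
    + unfold Rdiv. apply Rmult_le_compat_r; [left; apply Rinv_0_lt_compat; lra|]. lra.
Qed.

Lemma pow_m1_abs n : Rabs ((-1)^n) = 1.
Proof. rewrite <- RPow_abs, Rabs_m1, pow1. reflexivity. Qed.

Lemma cv_abs_bounds (u : nat -> R) x k X lo hi :
  Un_cv u x ->
  (exists m0, forall m, (m0 <= m)%nat -> lo <= Rabs (k * u m - X) <= hi) ->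
  lo <= Rabs (k * x - X) <= hi.
Proof.
  intros Hcv [m0 Hm].
  assert (Key : forall e, 0 < e -> exists m, (m0 <= m)%nat /\ Rabs (Rabs (k * u m - X) - Rabs (k*x - X)) < e).
  { intros e He. destruct (Hcv (e / (Rabs k + 1))) as [N HN].
    { apply Rdiv_lt_0_compat; [lra|]. pose proof (Rabs_pos k); lra. }
    exists (max N m0). split; [lia|].
    specialize (HN (max N m0) ltac:(lia)). unfold R_dist in HN.
    eapply Rle_lt_trans. apply Rabs_triang_inv2.
    replace (k * u (max N m0) - X - (k * x - X)) with (k * (u (max N m0) - x)) by ring.
    rewrite Rabs_mult. pose proof (Rabs_pos k). pose proof (Rabs_pos (u (Init.Nat.max N m0) - x)).
    apply (Rle_lt_trans _ ((Rabs k + 1) * Rabs (u (Init.Nat.max N m0) - x))). nra.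
    apply (Rmult_lt_reg_l (/ (Rabs k + 1))). apply Rinv_0_lt_compat; lra.
    rewrite <- Rmult_assoc, Rinv_l by lra. rewrite Rmult_1_l. 
    replace (/ (Rabs k + 1) * e) with (e / (Rabs k + 1)) by (field; lra). exact HN. }
  split.
  - destruct (Rle_lt_dec lo (Rabs (k*x - X))) as [H|H]; auto.
    destruct (Key (lo - Rabs (k*x - X))) as [m [Hm1 Hm2]]. lra.
    specialize (Hm m Hm1). apply Rabs_def2 in Hm2. lra.
  - destruct (Rle_lt_dec (Rabs (k*x - X)) hi) as [H|H]; auto.
    destruct (Key (Rabs (k*x - X) - hi)) as [m [Hm1 Hm2]]. lra.
    specialize (Hm m Hm1). apply Rabs_def2 in Hm2. lra.
Qed.

Lemma dist_int_le x (k : Z) : dist_int x <= Rabs (x - IZR k).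
Proof.
  unfold dist_int, frac_part, Int_part.
  pose proof (archimed x) as [H1 H2].
  set (n := (up x - 1)%Z). 
  assert (Hn : IZR n <= x < IZR n + 1).
  { unfold n. rewrite minus_IZR. simpl. lra. }
  replace (x - IZR (up x - 1)) with (x - IZR n) by reflexivity.
  destruct (Z.lt_ge_cases k n) as [Hk|Hk].
  - assert (Hk' : (k + 1 <= n)%Z) by lia. apply IZR_le in Hk'. rewrite plus_IZR in Hk'. simpl in Hk'.
    apply Rle_trans with (x - IZR n). apply Rmin_l.
    rewrite Rabs_pos_eq by lra. lra.
  - destruct (Z.eq_dec k n) as [->|Hk2].
    + apply Rle_trans with (x - IZR n). apply Rmin_l. rewrite Rabs_pos_eq by lra. lra.
    + assert (Hk3 : (n + 1 <= k)%Z) by lia. apply IZR_le in Hk3. rewrite plus_IZR in Hk3. simpl in Hk3.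
      apply Rle_trans with (1 - (x - IZR n)). apply Rmin_r.
      rewrite Rabs_left by lra. lra.
Qed.

Lemma dist_int_nonneg x : 0 <= dist_int x.
Proof.
  unfold dist_int. pose proof (base_fp x) as [H1 H2].
  apply Rmin_glb; lra.
Qed.


Lemma natb_map (f : nat -> nat) s m lo hi :
  (forall i, (s <= i < s + m)%nat -> (lo <= f i <= hi)%nat) -> natb lo hi (map f (seq s m)).
Proof.
  intros H. unfold natb. apply Forall_forall. intros x Hx.
  apply in_map_iff in Hx. destruct Hx as [i [<- Hi]]. apply in_seq in Hi. apply H. lia.
Qed.

Lemma natb_pos1' lo hi l : natb lo hi l -> (1 <= lo)%nat -> pos1 l.
Proof. intros; eapply natb_pos1; eauto. Qed.

Lemma natb_le lo hi l : natb lo hi l -> List.Forall (fun x => (x <= hi)%nat) l.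
Proof. induction 1; constructor; auto; lia. Qed.

Lemma natb_app lo hi l1 l2 : natb lo hi l1 -> natb lo hi l2 -> natb lo hi (l1 ++ l2).
Proof. intros; apply Forall_app; auto. Qed.

Lemma natb_weak lo hi lo' hi' l : (lo' <= lo)%nat -> (hi <= hi')%nat -> natb lo hi l -> natb lo' hi' l.
Proof. intros H1 H2. induction 1; constructor; auto; lia. Qed.

Lemma natb_rev lo hi l : natb lo hi l -> natb lo hi (rev l).
Proof. intros H. unfold natb in *. apply Forall_rev. auto. Qed.

Lemma conv_split (b : nat -> nat) n m :
  convergent b (n + m) = cfz (map b (seq 1 n)) (cf_fin (map b (seq (1 + n) m))).
Proof. unfold convergent. rewrite seq_app, map_app, cf_fin_app. reflexivity. Qed.

Lemma cv_shift (u : nat -> R) x n : Un_cv u x -> Un_cv (fun m => u (n + m)%nat) x.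
Proof.
  intros H e He. destruct (H e He) as [N HN]. exists N. intros m Hm. apply HN. lia.
Qed.

Lemma qn_growth (a : nat -> nat) : (forall i, (1 <= i)%nat -> (1 <= a i)%nat) ->
  forall n, INR (ma (mk (map a (seq 1 (S n))))) >= (8/5)^n /\
            INR (mb (mk (map a (seq 1 (S n))))) * (8/5) >= (8/5)^n.
Proof.
  intros Ha. induction n as [|n IH].
  - simpl. pose proof (Ha 1%nat ltac:(lia)) as H. apply le_INR in H.
    simpl. rewrite !plus_INR, !mult_INR. simpl INR in *. split; lra.
  - rewrite seq_S, map_app. change (map a [(1 + S n)%nat]) with [a (S (S n))]. rewrite mk_snoc.
    destruct (mk (map a (seq 1 (S n)))) as [[[x y] z] w]. cbn [ma mb] in *.
    pose proof (Ha (1 + S n)%nat ltac:(lia)) as H. apply le_INR in H. simpl INR in H.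
    rewrite plus_INR, mult_INR. destruct IH as [H1 H2].
    pose proof (pos_INR x). pose proof (pos_INR y).
    assert (0 <= (8/5)^n) by (apply pow_le; lra).
    simpl pow. split; [|nra]. assert (INR x * INR (a (S (S n))) >= INR x) by nra. nra.
Qed.

Section Beta.
Variables (a t ns : nat -> nat).

Definition blk (j : nat) := beta_block a t ns j.
Definition Wd (j : nat) := concat (map blk (seq 1 j)).

Lemma Wd_S j : Wd (S j) = Wd j ++ blk (S j).
Proof. unfold Wd. rewrite seq_S, map_app, concat_app. simpl. rewrite app_nil_r. reflexivity. Qed.

Lemma blk_len j : (1 <= length (blk j))%nat.
Proof. unfold blk, beta_block. rewrite length_app. simpl. lia. Qed.

Lemma Wd_len j : (j <= length (Wd j))%nat.
Proof. induction j. simpl; lia. rewrite Wd_S, length_app. pose proof (blk_len (S j)). lia. Qed.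

Lemma Wd_prefix j k : (j <= k)%nat -> exists s, Wd k = Wd j ++ s.
Proof.
  induction 1. exists nil. now rewrite app_nil_r.
  destruct IHle as [s Hs]. exists (s ++ blk (S m)). rewrite Wd_S, Hs, app_assoc. reflexivity.
Qed.

Lemma beta_pq_nth J k : (1 <= k)%nat -> (k <= length (Wd J))%nat ->
  beta_pq a t ns k = nth (k - 1) (Wd J) 0%nat.
Proof.
  intros H1 H2. unfold beta_pq. change (concat (map (beta_block a t ns) (seq 1 k))) with (Wd k).
  destruct (Nat.le_ge_cases k J) as [H|H].
  - destruct (Wd_prefix k J H) as [s Hs]. rewrite Hs. rewrite app_nth1. reflexivity.
    pose proof (Wd_len k). lia.
  - destruct (Wd_prefix J k H) as [s Hs]. rewrite Hs. rewrite app_nth1. reflexivity. lia.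
Qed.

Lemma map_beta_prefix J L : (L <= length (Wd J))%nat ->
  map (beta_pq a t ns) (seq 1 L) = firstn L (Wd J).
Proof.
  intros HL. apply nth_ext with (d := 0%nat) (d' := 0%nat).
  - rewrite length_map, length_seq, length_firstn. lia.
  - intros i Hi. rewrite length_map, length_seq in Hi.
    rewrite nth_firstn. destruct (Nat.ltb i L) eqn:E; [|apply Nat.ltb_ge in E; lia].
    rewrite (nth_indep _ 0%nat (beta_pq a t ns 0)) by (rewrite length_map, length_seq; lia).
    rewrite map_nth, seq_nth by lia.
    rewrite (beta_pq_nth J) by lia. f_equal. lia.
Qed.
End Beta.


Lemma firstn_len_app {T} (X Y : list T) : firstn (length X) (X ++ Y) = X.
Proof. rewrite firstn_app, firstn_all, Nat.sub_diag. simpl. apply app_nil_r. Qed.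

Section Cut.
Variables (M : nat) (a t ns : nat -> nat) (alpha beta : R).
Hypothesis HM : (2 <= M)%nat.
Hypothesis Ha : forall i, (1 <= i)%nat -> (1 <= a i <= M)%nat.
Hypothesis Halpha : is_cf_value a alpha.
Hypothesis Ht : forall i, (1 <= i)%nat -> t i = (M + 1)%nat \/ t i = (M + 2)%nat.
Hypothesis Hn : forall i, (1 <= i)%nat -> (1 <= ns i)%nat.
Hypothesis Hbeta : is_cf_value (beta_pq a t ns) beta.

Lemma la_natb n : natb 1 M (map a (seq 1 n)).
Proof. apply natb_map. intros i Hi. apply Ha. lia. Qed.

Lemma blk_eq j : blk a t ns j = rev (map a (seq 1 (ns j))) ++ [t j].
Proof. unfold blk, beta_block, rev_word. now rewrite map_rev. Qed.

Lemma Wd_natb j : natb 1 (M+2) (Wd a t ns j).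
Proof.
  induction j. constructor.
  rewrite Wd_S. apply natb_app; auto. rewrite blk_eq. apply natb_app.
  - apply natb_rev. eapply natb_weak; [| |apply la_natb]; lia.
  - constructor; [|constructor]. destruct (Ht (S j)); lia.
Qed.

Lemma Wd_AB j : (1 <= j)%nat -> let '(A,B,C,D) := mk (Wd a t ns j) in (INR M + 1) * INR B <= INR A.
Proof.
  intros Hj. destruct j. lia. rewrite Wd_S, blk_eq, app_assoc, mk_snoc.
  destruct (mk (Wd a t ns j ++ rev (map a (seq 1 (ns (S j)))))) as [[[x y] z] w].
  assert (Htt : (M + 1 <= t (S j))%nat) by (destruct (Ht (S j)); lia).
  apply le_INR in Htt. rewrite plus_INR in Htt. simpl INR in Htt.
  rewrite plus_INR, mult_INR. pose proof (pos_INR x). pose proof (pos_INR y). nra.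
Qed.

Lemma Wd_A_ge j : (S j <= ma (mk (Wd a t ns j)))%nat.
Proof.
  induction j. simpl. lia.
  rewrite Wd_S, blk_eq, app_assoc, mk_snoc, mk_app.
  assert (HR : (1 <= ma (mk (rev (map a (seq 1 (ns (S j)))))))%nat).
  { apply mk_a_pos. apply (natb_pos1' 1 M); [|lia]. apply natb_rev, la_natb. }
  assert (Htt : (M + 1 <= t (S j))%nat) by (destruct (Ht (S j)); lia).
  destruct (mk (Wd a t ns j)) as [[[x y] z] w].
  destruct (mk (rev (map a (seq 1 (ns (S j)))))) as [[[x' y'] z'] w'].
  cbn [ma mmul] in *. assert (x * x' >= x)%nat by nia. assert ((x * x' + y * z') * t (S j) >= x * 3)%nat by nia. lia.
Qed.

Lemma beta_ge1 k : (1 <= k)%nat -> (1 <= beta_pq a t ns k <= M + 2)%nat.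
Proof.
  intros Hk. rewrite (beta_pq_nth a t ns k k) by (auto; apply Wd_len).
  pose proof (Wd_natb k) as H. unfold natb in H. rewrite Forall_forall in H.
  apply H. apply nth_In. pose proof (Wd_len a t ns k). lia.
Qed.


Definition rho := 1 / (INR M + (INR M + 1) / (INR M + 2)).

Lemma cut j : (1 <= j)%nat ->
  exists q X P A qn : nat,
    INR A * INR qn <= INR q <= 2 * INR A * INR qn /\
    (1 <= qn)%nat /\ INR qn >= (8/5)^(pred (ns (S j))) /\
    (S j <= A)%nat /\ INR A <= INR (M+2+1)^(length (Wd a t ns j)) /\
    Rabs (INR q * alpha - INR X) <= INR A / INR qn /\
    (rho - 1/(INR M + 1)) * INR A / (2 * INR qn) <= Rabs (INR q * alpha - INR X) /\
    (1/(INR (M+2) + 1)) / (2 * INR q) <= Rabs (INR q * beta - INR P) <= (1 / INR (M+1)) / INR q.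
Proof.
  intros Hj.
  set (n := ns (S j)). assert (Hn1 : (1 <= n)%nat) by (apply Hn; lia).
  set (l := map a (seq 1 n)).
  assert (Hl : pos1 l) by (apply (natb_pos1' 1 M); [apply la_natb|lia]).
  assert (Hlne : l <> nil).
  { unfold l. destruct n. lia. simpl. congruence. }
  pose proof (mk_ineq l Hl Hlne) as Hineq.
  pose proof (mk_det l) as Hdetl.
  pose proof (Wd_AB j Hj) as HAB.
  pose proof (Wd_A_ge j) as HAj.
  pose proof (mk_bound (Wd a t ns j) (M+2) (natb_le _ _ _ (Wd_natb j))) as HAbd.
  pose proof (qn_growth a (fun i Hi => proj1 (Ha i Hi)) (pred n)) as Hgr.
  replace (S (pred n)) with n in Hgr by lia. fold l in Hgr.
  set (R := rev l).
  assert (HWS : Wd a t ns (S j) = (Wd a t ns j ++ R) ++ [t (S j)]).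
  { rewrite Wd_S, blk_eq, app_assoc. reflexivity. }
  assert (HmkWR : mk (Wd a t ns j ++ R) = mmul (mk (Wd a t ns j)) (tr (mk l))).
  { unfold R. rewrite mk_app, mk_rev. reflexivity. }
  pose proof (mk_det (Wd a t ns j ++ R)) as HdetWR.
  assert (HWRpos : pos1 (Wd a t ns j ++ R)).
  { apply (natb_pos1' 1 (M+2)); [|lia]. apply natb_app. apply Wd_natb.
    apply natb_rev. eapply natb_weak; [| |apply la_natb]; lia. }
  set (L := length (Wd a t ns j ++ R)).
  assert (Hbconv : forall m, convergent (beta_pq a t ns) (L + S m) =
       mob (mk (Wd a t ns j ++ R)) (cf_fin (t (S j) :: map (beta_pq a t ns) (seq (2 + L) m)))
     /\ 1 / (INR (M+2) + 1) <= cf_fin (t (S j) :: map (beta_pq a t ns) (seq (2 + L) m)) <= 1 / INR (M+1)).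
  { intros m. rewrite conv_split.
    assert (HLle : (L <= length (Wd a t ns (S j)))%nat). { unfold L. rewrite HWS. rewrite (length_app (Wd a t ns j ++ R)). simpl length. lia. }
    rewrite (map_beta_prefix a t ns (S j) L HLle).
    rewrite HWS. unfold L at 1. rewrite firstn_len_app.
    assert (Hfirst : beta_pq a t ns (1 + L) = t (S j)).
    { rewrite (beta_pq_nth a t ns (S j)) by (try lia; unfold L; rewrite HWS, !length_app; simpl; lia).
      rewrite HWS, app_nth2 by (unfold L; lia). unfold L.
      replace (1 + length (Wd a t ns j ++ R) - 1 - length (Wd a t ns j ++ R))%nat with 0%nat by lia. reflexivity. }
    assert (Hrest : pos1 (map (beta_pq a t ns) (seq (2 + L) m))).
    { apply (natb_pos1' 1 (M+2)); [|lia]. apply natb_map. intros i Hi. apply beta_ge1. lia. }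
    simpl seq. simpl map. change (S L) with (1 + L)%nat at 1. rewrite Hfirst.
    change (S (S L)) with (2 + L)%nat.
    pose proof (cf_fin_cons_bounds (t (S j)) _ (M+1) (M+2) Hrest ltac:(lia) ltac:(destruct (Ht (S j)); lia)) as Hb.
    split; [|exact Hb].
    apply cfz_mob; auto.
    pose proof (Hb) as [Hb1 _]. eapply Rle_trans; [|exact Hb1].
    apply Rlt_le, Rdiv_lt_0_compat. lra. pose proof (pos_INR (M+2)); lra. }
  assert (Haconv : forall m, convergent a (n + S (S (S m))) =
       mob (mk l) (cf_fin (map a (seq (1 + n) (S (S (S m))))))
     /\ rho <= cf_fin (map a (seq (1 + n) (S (S (S m))))) <= 1).
  { intros m. rewrite conv_split. fold l.
    assert (Htl : natb 1 M (map a (seq (1 + n) (S (S (S m)))))).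
    { apply natb_map. intros i Hi. apply Ha. lia. }
    pose proof (cf_fin_01 _ (natb_pos1' _ _ _ Htl ltac:(lia))) as H01.
    split. apply cfz_mob; auto. lra.
    split; [|lra].
    simpl seq in *. simpl map in *. inversion Htl; subst. inversion H2; subst.
    apply cf_fin_3; auto. lia. congruence. }
  destruct (mk (Wd a t ns j)) as [[[A B] C] D] eqn:EW.
  destruct (mk l) as [[[a1 b1] c1] d1] eqn:El.
  cbn [tr mmul] in HmkWR. rewrite HmkWR in Hbconv, HdetWR. cbn [ma mb mc md] in *.
  exists (A*a1 + B*b1)%nat, (A*c1 + B*d1)%nat, (C*a1 + D*b1)%nat, A, a1.
  destruct HAbd as [HAbd _].
  destruct Hineq as (Hba & Hdc & Hca & Hdb & Ha1).
  assert (HBA : (B <= A)%nat).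
  { apply INR_le. pose proof (pos_INR B). apply le_INR in HM. simpl INR in HM. nra. }
  split.
  { rewrite plus_INR, !mult_INR. apply le_INR in Hba. apply le_INR in HBA.
    pose proof (pos_INR A); pose proof (pos_INR B); pose proof (pos_INR b1). nra. }
  split; [lia|]. split; [lra|]. split; [lia|]. split; [exact HAbd|].
  assert (Hrho : 1 / (INR M + 1) <= rho).
  { unfold rho. apply le_INR in HM. simpl INR in HM.
    apply Rmult_le_compat_l; [lra|]. apply Rinv_le_contravar.
    assert (0 < (INR M + 1)/(INR M + 2)) by (apply Rdiv_lt_0_compat; lra). lra.
    assert (Hq : (INR M + 1)/(INR M + 2) = 1 - 1/(INR M + 2)) by (field; lra).
    assert (0 < 1/(INR M + 2)) by (apply Rdiv_lt_0_compat; lra). lra. }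
  assert (HA : forall lo hi, (forall m, lo <= Rabs (INR (A * a1 + B * b1) * mob (a1, b1, c1, d1) (cf_fin (map a (seq (1 + n) (S (S (S m)))))) - INR (A * c1 + B * d1)) <= hi) ->
        lo <= Rabs (INR (A * a1 + B * b1) * alpha - INR (A * c1 + B * d1)) <= hi).
  { intros lo hi Hm. apply (cv_abs_bounds (fun m => convergent a (n + m))). apply cv_shift, Halpha.
    exists 3%nat. intros m Hm3. replace m with (S (S (S (m - 3)))) by lia.
    destruct (Haconv (m - 3)%nat) as [E _]. rewrite E. apply Hm. }
  assert (HdetA : Rabs (INR a1 * INR d1 - INR b1 * INR c1) = 1) by (rewrite Hdetl; apply pow_m1_abs).
  assert (HMpos : 0 < INR M + 1) by (pose proof (pos_INR M); lra).
  split.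
  { refine (proj2 (HA 0 (INR A / INR a1) _)). intros m.
    destruct (Haconv m) as [_ Hz]. pose proof (alpha_est A B a1 b1 c1 d1 _ rho (INR M + 1) HdetA Hba Ha1 HMpos HAB Hz Hrho) as [H1 H2].
    split; [apply Rabs_pos|exact H1]. }
  split.
  { refine (proj1 (HA _ (INR A / INR a1 + Rabs (INR (A * a1 + B * b1) * alpha - INR (A * c1 + B * d1))) _)). intros m.
    destruct (Haconv m) as [_ Hz]. pose proof (alpha_est A B a1 b1 c1 d1 _ rho (INR M + 1) HdetA Hba Ha1 HMpos HAB Hz Hrho) as [H1 H2].
    split; [exact H2|]. pose proof (Rabs_pos (INR (A * a1 + B * b1) * alpha - INR (A * c1 + B * d1))). lra. }
  apply (cv_abs_bounds (fun m => convergent (beta_pq a t ns) (L + m))). apply cv_shift, Hbeta.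
  exists 1%nat. intros m Hm1. replace m with (S (m - 1)) by lia.
  destruct (Hbconv (m - 1)%nat) as [E Hz]. rewrite E.
  apply beta_est.
  - rewrite HdetWR. apply pow_m1_abs.
  - nia.
  - nia.
  - apply Rdiv_lt_0_compat. lra. pose proof (pos_INR (M+2)); lra.
  - exact Hz.
  - rewrite plus_INR. simpl INR. unfold Rdiv. rewrite Rmult_1_l. rewrite <- Rinv_1. apply Rinv_le_contravar; pose proof (pos_INR M); lra.
Qed.

End Cut.


Lemma grows (f : nat -> R) j0 : (forall j, (j0 <= j)%nat -> f (S j) >= f j + 1) ->
  forall K, exists J, (j0 <= J)%nat /\ forall j, (J <= j)%nat -> f j >= K.
Proof.
  intros H K.
  assert (Hi : forall i, f (j0 + i)%nat >= f j0 + INR i).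
  { induction i. rewrite Nat.add_0_r. simpl. lra.
    rewrite Nat.add_succ_r, S_INR. specialize (H (j0 + i)%nat ltac:(lia)). lra. }
  destruct (INR_unbounded (K - f j0)) as [k Hk].
  exists (j0 + k)%nat. split; [lia|]. intros j Hj.
  replace j with (j0 + (j - j0))%nat by lia. specialize (Hi (j - j0)%nat).
  assert (INR (j - j0) >= INR k) by (apply Rle_ge, le_INR; lia). lra.
Qed.

Lemma liminf_extract (u : nat -> R) (L0 : R) :
  Rbar_lt (Finite L0) (LimInf_seq u) ->
  exists r N, L0 < r /\ forall n, (N <= n)%nat -> r < u n.
Proof.
  intros H. destruct (ex_LimInf_seq u) as [l Hl].
  rewrite (is_LimInf_seq_unique _ _ Hl) in H.
  destruct l as [l| |]; simpl in H.
  - assert (He : 0 < (l - L0)/2) by lra.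
    destruct (Hl (mkposreal _ He)) as [_ [N HN]]. simpl in HN.
    exists ((l + L0)/2), N. split. lra. intros n Hn. specialize (HN n Hn). lra.
  - destruct (Hl (L0 + 1)) as [N HN]. exists (L0 + 1), N. split. lra. auto.
  - contradiction.
Qed.

Lemma Wd_len_S a t ns j : length (Wd a t ns (S j)) = (length (Wd a t ns j) + ns (S j) + 1)%nat.
Proof.
  rewrite Wd_S. unfold blk, beta_block, rev_word. rewrite !length_app, length_map, length_rev, length_seq.
  simpl. lia.
Qed.

Lemma ln_facts : 2 * ln 2 <= 3 * ln (8/5) /\ 0 < ln 2 /\ 0 < ln (8/5).
Proof.
  split; [|split].
  - pose proof (ln_pow 2 2 ltac:(lra)) as E1. pose proof (ln_pow (8/5) 3 ltac:(lra)) as E2.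
    assert (ln (2^2) < ln ((8/5)^3)) by (apply ln_increasing; simpl; lra).
    simpl INR in E1, E2. lra.
  - rewrite <- ln_1. apply ln_increasing; lra.
  - rewrite <- ln_1. apply ln_increasing; lra.
Qed.

Section Asym.
Variables (M : nat) (eps : R) (a t ns : nat -> nat).
Hypothesis HM : (2 <= M)%nat.
Hypothesis Heps : 0 < eps < 1.
Hypothesis Hn : forall i, (1 <= i)%nat -> (1 <= ns i)%nat.
Hypothesis Hliminf : Rbar_lt
      (Finite (4 * ln (INR M + 3) / (eps * ln 2)))
      (LimInf_seq (fun i => INR (ns (S i)) / INR (ns i))).

Lemma asym : exists J, (1 <= J)%nat /\ forall j, (J <= j)%nat ->
  ln 4 + 2 * INR (length (Wd a t ns j)) * ln (INR M + 3) <= eps * INR (pred (ns (S j))) * ln (8/5).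
Proof.
  destruct (liminf_extract _ _ Hliminf) as [r [N [Hr HN]]].
  set (L0 := 4 * ln (INR M + 3) / (eps * ln 2)) in *.
  destruct ln_facts as (Hl1 & Hl2 & Hl3).
  assert (HM3 : ln 2 < ln (INR M + 3)).
  { apply ln_increasing. lra. apply le_INR in HM. simpl in HM. lra. }
  set (kap := 2 * ln (INR M + 3) / (eps * ln (8/5))).
  set (C0 := ln 4 / (eps * ln (8/5))).
  assert (HL0 : 4 < L0).
  { unfold L0. apply (Rmult_lt_reg_r (eps * ln 2)). nra.
    field_simplify; [|nra]. nra. }
  assert (Hkap : kap <= 3/4 * L0).
  { unfold kap, L0. 
    assert (0 < eps * ln (8/5)) by nra. assert (0 < eps * ln 2) by nra.
    assert (0 < ln (INR M + 3)) by lra.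
    unfold Rdiv. rewrite !Rinv_mult.
    assert (/ ln (8/5) <= 3/2 * / ln 2).
    { apply (Rmult_le_reg_l (ln (8/5) * ln 2)). nra. field_simplify; try lra. }
    assert (0 < / eps) by (apply Rinv_0_lt_compat; lra).
    assert (0 < /ln 2) by (apply Rinv_0_lt_compat; lra).
    assert (0 < /ln (8/5)) by (apply Rinv_0_lt_compat; lra).
    assert (2 * ln (INR M + 3) * (/ eps) * / ln (8 / 5) <= 2 * ln (INR M + 3) * / eps * (3/2 * / ln 2)).
    { apply Rmult_le_compat_l; auto. apply Rmult_le_pos; [|lra]. lra. }
    lra. }
  assert (Hkr : kap + 1 < r) by lra.
  set (mu := (kap + r - 1)/2).
  set (j0 := max N 1).
  set (nn := fun j => INR (ns j)).
  assert (Hgr : forall j, (j0 <= j)%nat -> nn (S j) > r * nn j).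
  { intros j Hj. specialize (HN j ltac:(lia)). unfold nn.
    assert (1 <= INR (ns j)) by (apply (le_INR 1); apply Hn; lia).
    apply (Rmult_lt_compat_r (INR (ns j))) in HN; [|lra].
    unfold Rdiv in HN. rewrite Rmult_assoc, Rinv_l in HN by lra. lra. }
  assert (Hnn1 : forall j, (1 <= j)%nat -> 1 <= nn j) by (intros j Hj; apply (le_INR 1); apply Hn; lia).
  assert (Hinc : forall j, (j0 <= j)%nat -> nn (S j) >= nn j + 1).
  { intros j Hj. specialize (Hgr j Hj). specialize (Hnn1 j ltac:(lia)). nra. }
  destruct (grows nn j0 Hinc ((mu + 1)/(r - mu - 1))) as [J1 [HJ1 HJ1']].
  set (s := fun j => INR (length (Wd a t ns j))).
  set (V := fun j => nn (S j) - mu * s j).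
  assert (HV : forall j, (J1 <= j)%nat -> V (S j) >= V j + 1).
  { intros j Hj. unfold V, s. rewrite Wd_len_S, !plus_INR. fold (s j). simpl INR.
    specialize (Hgr (S j) ltac:(lia)). specialize (HJ1' (S j) ltac:(lia)).
    assert (Hp : 0 < r - mu - 1) by (unfold mu; lra).
    assert (Hm : (r - mu - 1) * nn (S j) >= mu + 1).
    { assert (E : (r-mu-1) * ((mu+1)/(r-mu-1)) = mu+1) by (field; lra).
      assert ((r-mu-1) * nn (S j) >= (r-mu-1)*((mu+1)/(r-mu-1))) by (apply Rle_ge, Rmult_le_compat_l; lra). lra. }
    fold (nn (S j)). lra. }
  destruct (grows V J1 HV (1 + C0)) as [J2 [HJ2 HJ2']].
  exists (max J2 1). split; [lia|]. intros j Hj.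
  specialize (HJ2' j ltac:(lia)). unfold V in HJ2'.
  assert (Hs : 0 <= s j) by apply pos_INR.
  assert (Hpred : INR (pred (ns (S j))) = nn (S j) - 1).
  { unfold nn. specialize (Hn (S j) ltac:(lia)). destruct (ns (S j)). lia. simpl pred. rewrite S_INR. lra. }
  rewrite Hpred. fold (s j).
  assert (H1 : nn (S j) - 1 >= C0 + kap * s j).
  { assert (mu >= kap) by (unfold mu; lra). nra. }
  assert (Hpos : 0 < eps * ln (8/5)) by nra.
  apply Rge_le in H1. apply (Rmult_le_compat_l (eps * ln (8/5))) in H1; [|lra].
  assert (E : eps * ln (8/5) * (C0 + kap * s j) = ln 4 + 2 * s j * ln (INR M + 3)) by (unfold C0, kap; field; lra).
  assert (E2 : eps * (nn (S j) - 1) * ln (8/5) = eps * ln (8/5) * (nn (S j) - 1)) by ring.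
  lra.
Qed.
End Asym.


Lemma my_ln_le x y : 0 < x -> x <= y -> ln x <= ln y.
Proof. intros H1 [H2|H2]. left; apply ln_increasing; auto. subst; lra. Qed.
Lemma my_exp_le x y : x <= y -> exp x <= exp y.
Proof. intros [H|H]. left; apply exp_increasing; auto. subst; lra. Qed.

Lemma IZR_small (z : Z) : Rabs (IZR z) < 1 -> z = 0%Z.
Proof.
  intros H. rewrite Rabs_Zabs in H. apply lt_IZR in H. lia.
Qed.

Lemma IZR_ne0 (z : Z) : z <> 0%Z -> 1 <= Rabs (IZR z).
Proof.
  intros H. rewrite Rabs_Zabs. apply IZR_le. lia.
Qed.

Lemma rho_gap M : (2 <= M)%nat -> 0 < rho M - 1 / (INR M + 1).
Proof.
  intros HM. unfold rho. apply le_INR in HM. simpl INR in HM.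
  assert (Hq : (INR M + 1)/(INR M + 2) = 1 - 1/(INR M + 2)) by (field; lra).
  assert (0 < 1/(INR M + 2)) by (apply Rdiv_lt_0_compat; lra).
  assert (1/(INR M + 2) < 1).
  { unfold Rdiv. rewrite Rmult_1_l. rewrite <- Rinv_1. apply Rinv_lt_contravar; lra. }
  unfold Rdiv at 1 2. rewrite !Rmult_1_l.
  assert (/ (INR M + 1) < / (INR M + (INR M + 1) / (INR M + 2))).
  { apply Rinv_lt_contravar. apply Rmult_lt_0_compat; lra. lra. }
  lra.
Qed.

Section Main.
Variables (M : nat) (eps : R) (a t ns : nat -> nat) (alpha beta : R).
Hypothesis HM : (2 <= M)%nat.
Hypothesis Heps : 0 < eps < 1.
Hypothesis Ha : forall i, (1 <= i)%nat -> (1 <= a i <= M)%nat.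
Hypothesis Halpha : is_cf_value a alpha.
Hypothesis Ht : forall i, (1 <= i)%nat -> t i = (M + 1)%nat \/ t i = (M + 2)%nat.
Hypothesis Hn : forall i, (1 <= i)%nat -> (1 <= ns i)%nat.
Hypothesis Hliminf : Rbar_lt
      (Finite (4 * ln (INR M + 3) / (eps * ln 2)))
      (LimInf_seq (fun i => INR (ns (S i)) / INR (ns i))).
Hypothesis Hbeta : is_cf_value (beta_pq a t ns) beta.

Lemma data : exists J, forall j, (J <= j)%nat ->
  exists q X P A qn : nat,
    INR A * INR qn <= INR q <= 2 * INR A * INR qn /\
    (1 <= qn)%nat /\ (S j <= A)%nat /\
    4 * INR A ^ 2 <= Rpower (INR qn) eps /\
    Rabs (INR q * alpha - INR X) <= INR A / INR qn /\
    (rho M - 1/(INR M + 1)) * INR A / (2 * INR qn) <= Rabs (INR q * alpha - INR X) /\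
    (1/(INR (M+2) + 1)) / (2 * INR q) <= Rabs (INR q * beta - INR P) <= (1 / INR (M+1)) / INR q.
Proof.
  destruct (asym M eps a t ns HM Heps Hn Hliminf) as [J [HJ1 HJ]].
  exists J. intros j Hj.
  destruct (cut M a t ns alpha beta HM Ha Halpha Ht Hn Hbeta j ltac:(lia))
    as (q & X & P & A & qn & Hq & Hqn & Hgr & HA & HAb & H1 & H2 & H3).
  exists q, X, P, A, qn. repeat (split; [assumption|]).
  split; [|auto].
  specialize (HJ j Hj).
  assert (HA1 : 1 <= INR A) by (apply (le_INR 1); lia).
  assert (Hqn1 : 1 <= INR qn) by (apply (le_INR 1); lia).
  assert (HM3 : INR (M+2+1) = INR M + 3) by (rewrite !plus_INR; simpl; ring).
  rewrite HM3 in HAb.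
  assert (Hpos3 : 0 < INR M + 3) by (pose proof (pos_INR M); lra).
  assert (L1 : ln (INR A) <= INR (length (Wd a t ns j)) * ln (INR M + 3)).
  { rewrite <- ln_pow by lra. apply my_ln_le; lra. }
  assert (L2 : INR (pred (ns (S j))) * ln (8/5) <= ln (INR qn)).
  { rewrite <- ln_pow by lra. apply my_ln_le. apply pow_lt; lra. lra. }
  assert (L3 : ln (4 * INR A ^ 2) <= eps * ln (INR qn)).
  { rewrite ln_mult, ln_pow by (try apply pow_lt; lra). simpl INR.
    apply Rle_trans with (eps * (INR (pred (ns (S j))) * ln (8/5))); [nra|].
    apply Rmult_le_compat_l; lra. }
  unfold Rpower. rewrite <- (exp_ln (4 * INR A ^ 2)) by (apply Rmult_lt_0_compat; [lra|apply pow_lt; lra]).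
  apply my_exp_le. lra.
Qed.

End Main.


Section Final.
Variables (M : nat) (eps : R) (a t ns : nat -> nat) (alpha beta : R).
Hypothesis HM : (2 <= M)%nat.
Hypothesis Heps : 0 < eps < 1.
Hypothesis Ha : forall i, (1 <= i)%nat -> (1 <= a i <= M)%nat.
Hypothesis Halpha : is_cf_value a alpha.
Hypothesis Ht : forall i, (1 <= i)%nat -> t i = (M + 1)%nat \/ t i = (M + 2)%nat.
Hypothesis Hn : forall i, (1 <= i)%nat -> (1 <= ns i)%nat.
Hypothesis Hliminf : Rbar_lt
      (Finite (4 * ln (INR M + 3) / (eps * ln 2)))
      (LimInf_seq (fun i => INR (ns (S i)) / INR (ns i))).
Hypothesis Hbeta : is_cf_value (beta_pq a t ns) beta.

Lemma part2 : forall N : nat, exists q : nat, (N < q)%nat /\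
        INR q * dist_int (INR q * alpha) * dist_int (INR q * beta)
          <= 1 / Rpower (INR q) (1 - eps).
Proof.
  intros N.
  destruct (data M eps a t ns alpha beta HM Heps Ha Halpha Ht Hn Hliminf Hbeta) as [J HJ].
  destruct (HJ (max J N) ltac:(lia)) as
    (q & X & P & A & qn & [Hq1 Hq2] & Hqn & HA & HK & H1 & _ & _ & H3).
  exists q.
  assert (HA1 : 1 <= INR A) by (apply (le_INR 1); lia).
  assert (Hqn1 : 1 <= INR qn) by (apply (le_INR 1); lia).
  assert (HqA : INR A <= INR q) by nra.
  split.
  { apply INR_lt. apply Rlt_le_trans with (INR A); [|lra]. apply lt_INR. lia. }
  assert (Hq0 : 0 < INR q) by lra.
  assert (HM1 : INR (M+1) = INR M + 1) by (rewrite plus_INR; simpl; ring).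
  rewrite HM1 in H3.
  assert (HMp : 0 < INR M + 1) by (pose proof (pos_INR M); lra).
  assert (D1 : dist_int (INR q * alpha) <= INR A / INR qn).
  { eapply Rle_trans; [|exact H1]. rewrite INR_IZR_INZ with (n := X). apply dist_int_le. }
  assert (D2 : dist_int (INR q * beta) <= (1 / (INR M + 1)) / INR q).
  { eapply Rle_trans; [|apply H3]. rewrite INR_IZR_INZ with (n := P). apply dist_int_le. }
  pose proof (dist_int_nonneg (INR q * alpha)). pose proof (dist_int_nonneg (INR q * beta)).
  assert (Prod : INR q * dist_int (INR q * alpha) * dist_int (INR q * beta) <= INR A / ((INR M + 1) * INR qn)).
  { apply Rle_trans with (INR q * (INR A / INR qn) * ((1 / (INR M + 1)) / INR q)).
    - apply Rmult_le_compat. apply Rmult_le_pos; lra. lra. apply Rmult_le_compat_l; lra. exact D2.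
    - right. field. lra. }
  set (Rq := Rpower (INR q) (1 - eps)).
  assert (HRq : 0 < Rq) by (unfold Rq, Rpower; apply exp_pos).
  assert (HRqn : 0 < Rpower (INR qn) eps) by (unfold Rpower; apply exp_pos).
  assert (B1 : Rq <= Rpower (2 * INR A) (1 - eps) * Rpower (INR qn) (1 - eps)).
  { rewrite Rpower_mult_distr by lra. apply Rle_Rpower_l; [lra|]. split; lra. }
  assert (B2 : Rpower (2 * INR A) (1 - eps) <= 2 * INR A).
  { rewrite <- (Rpower_1 (2 * INR A)) at 2 by lra. apply Rle_Rpower; lra. }
  assert (B3 : Rpower (INR qn) (1 - eps) = INR qn / Rpower (INR qn) eps).
  { unfold Rminus. rewrite Rpower_plus, Rpower_Ropp, Rpower_1 by lra. reflexivity. }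
  assert (B4 : Rq <= 2 * INR A * (INR qn / Rpower (INR qn) eps)).
  { rewrite <- B3. eapply Rle_trans; [exact B1|]. apply Rmult_le_compat_r; [|exact B2].
    unfold Rpower; left; apply exp_pos. }
  assert (B5 : INR qn / Rpower (INR qn) eps <= INR qn / (4 * INR A ^ 2)).
  { unfold Rdiv. apply Rmult_le_compat_l; [lra|]. apply Rinv_le_contravar; [|lra]. nra. }
  assert (B6 : INR A * Rq <= INR qn / 2).
  { apply Rle_trans with (INR A * (2 * INR A * (INR qn / (4 * INR A ^ 2)))).
    - apply Rmult_le_compat_l; [lra|]. eapply Rle_trans; [exact B4|]. apply Rmult_le_compat_l; lra.
    - right. field. lra. }
  eapply Rle_trans; [exact Prod|].
  apply (Rmult_le_reg_r (Rq * ((INR M + 1) * INR qn))). apply Rmult_lt_0_compat; nra.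
  replace (INR A / ((INR M + 1) * INR qn) * (Rq * ((INR M + 1) * INR qn))) with (INR A * Rq) by (field; nra).
  replace (1 / Rq * (Rq * ((INR M + 1) * INR qn))) with ((INR M + 1) * INR qn) by (field; lra).
  assert ((INR M + 1) * INR qn >= INR qn) by (pose proof (pos_INR M); nra). lra.
Qed.

Lemma indep_Z (u0 u1 u2 : Z) : IZR u0 + IZR u1 * alpha + IZR u2 * beta = 0 ->
  u0 = 0%Z /\ u1 = 0%Z /\ u2 = 0%Z.
Proof.
  intros Heq.
  destruct (data M eps a t ns alpha beta HM Heps Ha Halpha Ht Hn Hliminf Hbeta) as [J HJ].
  set (U1 := Rabs (IZR u1)). set (U2 := Rabs (IZR u2)).
  pose proof (rho_gap M HM) as Hc. set (c := rho M - 1 / (INR M + 1)) in *.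
  destruct (INR_unbounded (U1 + U2 + 2 * U2 / c + 2)) as [k Hk].
  destruct (HJ (max J k) ltac:(lia)) as
    (q & X & P & A & qn & [Hq1 Hq2] & Hqn & HA & HK & H1 & H2 & H3 & H4).
  assert (HA1 : 1 <= INR A) by (apply (le_INR 1); lia).
  assert (HAk : INR A > U1 + U2 + 2 * U2 / c + 1).
  { assert (INR k + 1 <= INR A) by (rewrite <- S_INR; apply le_INR; lia). lra. }
  assert (HU1 : 0 <= U1) by apply Rabs_pos. assert (HU2 : 0 <= U2) by apply Rabs_pos.
  assert (Hqn1 : 1 <= INR qn) by (apply (le_INR 1); lia).
  assert (HqA : INR A * INR qn <= INR q) by lra.
  assert (HqA' : INR A <= INR q) by nra.
  assert (HM1 : INR (M+1) = INR M + 1) by (rewrite plus_INR; simpl; ring).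
  assert (HM2 : INR (M+2) + 1 = INR M + 3) by (rewrite plus_INR; simpl; ring).
  rewrite HM1 in H4. rewrite HM2 in H3.
  assert (HMp : 0 < INR M + 1) by (pose proof (pos_INR M); lra).
  set (E1 := INR q * alpha - INR X) in *. set (E2 := INR q * beta - INR P) in *.
  assert (HRpow : Rpower (INR qn) eps <= INR qn).
  { rewrite <- (Rpower_1 (INR qn)) at 2 by lra. apply Rle_Rpower; lra. }
  assert (HE1 : Rabs E1 <= 1 / (4 * INR A)).
  { eapply Rle_trans; [exact H1|].
    apply (Rmult_le_reg_r (4 * INR A * INR qn)). nra.
    replace (INR A / INR qn * (4 * INR A * INR qn)) with (4 * INR A ^ 2) by (field; lra).
    replace (1 / (4 * INR A) * (4 * INR A * INR qn)) with (INR qn) by (field; lra). lra. }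
  assert (HE2 : Rabs E2 <= 1 / INR A).
  { eapply Rle_trans; [apply H4|].
    replace (1 / (INR M + 1) / INR q) with (/ ((INR M + 1) * INR q)) by (field; lra).
    unfold Rdiv. rewrite Rmult_1_l. apply Rinv_le_contravar. lra.
    apply le_INR in HM. simpl INR in HM. nra. }
  set (Zi := (- (u0 * Z.of_nat q + u1 * Z.of_nat X + u2 * Z.of_nat P))%Z).
  assert (HZi : IZR u1 * E1 + IZR u2 * E2 = IZR Zi).
  { unfold Zi, E1, E2. rewrite !INR_IZR_INZ. rewrite opp_IZR, !plus_IZR, !mult_IZR.
    assert (Heq' : IZR (Z.of_nat q) * (IZR u0 + IZR u1 * alpha + IZR u2 * beta) = 0) by (rewrite Heq; ring).
    lra. }
  assert (HZ0 : Zi = 0%Z).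
  { apply IZR_small. rewrite <- HZi.
    eapply Rle_lt_trans. apply Rabs_triang. rewrite !Rabs_mult. fold U1 U2.
    apply Rle_lt_trans with (U1 * (1 / (4 * INR A)) + U2 * (1 / INR A)).
    - apply Rplus_le_compat; apply Rmult_le_compat_l; auto.
    - apply (Rmult_lt_reg_r (INR A)); [lra|].
      replace ((U1 * (1 / (4 * INR A)) + U2 * (1 / INR A)) * INR A) with (U1 / 4 + U2) by (field; lra).
      assert (0 <= 2 * U2 / c) by (apply Rmult_le_pos; [lra|left; apply Rinv_0_lt_compat; lra]).
      lra. }
  rewrite HZ0 in HZi.
  assert (HE1pos : 0 < Rabs E1).
  { eapply Rlt_le_trans; [|exact H2]. apply Rmult_lt_0_compat. apply Rmult_lt_0_compat; lra.
    apply Rinv_0_lt_compat; lra. }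
  assert (HE2pos : 0 < Rabs E2).
  { eapply Rlt_le_trans; [|apply H3]. apply Rmult_lt_0_compat.
    apply Rdiv_lt_0_compat; lra. apply Rinv_0_lt_compat; lra. }
  assert (Hu2 : u2 = 0%Z).
  { destruct (Z.eq_dec u2 0) as [|Hne]; auto. exfalso.
    pose proof (IZR_ne0 u2 Hne) as HU2'. fold U2 in HU2'.
    assert (HEq : U1 * Rabs E1 = U2 * Rabs E2).
    { unfold U1, U2. rewrite <- !Rabs_mult. replace (IZR u1 * E1) with (- (IZR u2 * E2)) by (simpl in HZi; lra).
      apply Rabs_Ropp. }
    assert (HU1' : 1 <= U1).
    { apply IZR_ne0. intro Hu1. unfold U1 in HEq. rewrite Hu1 in HEq. rewrite Rabs_R0 in HEq. nra. }
    assert (Hlo : c * INR A / (2 * INR qn) <= U2 / (INR A * INR qn)).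
    { apply Rle_trans with (U1 * Rabs E1). nra. rewrite HEq.
      apply Rle_trans with (U2 * (1 / (INR M + 1) / INR q)). apply Rmult_le_compat_l; [lra|apply H4].
      replace (U2 * (1 / (INR M + 1) / INR q)) with (U2 / ((INR M + 1) * INR q)) by (field; nra).
      unfold Rdiv. apply Rmult_le_compat_l; [lra|]. apply Rinv_le_contravar. nra.
      apply le_INR in HM. simpl INR in HM. nra. }
    assert (Hlo2 : c * INR A ^ 2 <= 2 * U2).
    { apply (Rmult_le_compat_r (2 * INR A * INR qn)) in Hlo; [|nra].
      replace (c * INR A / (2 * INR qn) * (2 * INR A * INR qn)) with (c * INR A ^ 2) in Hlo by (field; lra).
      replace (U2 / (INR A * INR qn) * (2 * INR A * INR qn)) with (2 * U2) in Hlo by (field; nra). exact Hlo. }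
    assert (Hc2 : c * (2 * U2 / c) = 2 * U2) by (field; lra).
    assert (c * INR A <= c * INR A ^ 2) by (apply Rmult_le_compat_l; [lra|]; simpl; nra).
    assert (c * (2 * U2 / c + 1) < c * INR A) by (apply Rmult_lt_compat_l; lra).
    nra. }
  subst u2. 
  assert (Hu1 : u1 = 0%Z).
  { destruct (Z.eq_dec u1 0) as [|Hne]; auto. exfalso.
    pose proof (IZR_ne0 u1 Hne) as HU1'.
    assert (IZR u1 * E1 = 0) by (simpl in HZi; lra).
    apply Rmult_integral in H. destruct H as [H|H]. apply eq_IZR_R0 in H. contradiction.
    rewrite H, Rabs_R0 in HE1pos. lra. }
  subst u1. split; [|split; auto].
  apply eq_IZR. lra.
Qed.

End Final.


Lemma Z3 (n d1 d2 : Z) : (0 < d1)%Z -> (0 < d2)%Z -> (n * d1 * d2 = 0)%Z -> n = 0%Z.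
Proof. intros H1 H2 H. apply Z.mul_eq_0 in H. destruct H as [H|H]; [|lia].
  apply Z.mul_eq_0 in H. destruct H; lia. Qed.

Theorem theorem2
  (M : nat) (eps : R) (a t ns : nat -> nat) (alpha beta : R)
  (HM : (2 <= M)%nat)
  (Heps : 0 < eps < 1)
  (Ha : forall i, (1 <= i)%nat -> (1 <= a i <= M)%nat)
  (Halpha : is_cf_value a alpha)
  (Ht : forall i, (1 <= i)%nat -> t i = (M + 1)%nat \/ t i = (M + 2)%nat)
  (Hn : forall i, (1 <= i)%nat -> (1 <= ns i)%nat)
  (Hliminf : Rbar_lt
      (Finite (4 * ln (INR M + 3) / (eps * ln 2)))
      (LimInf_seq (fun i => INR (ns (S i)) / INR (ns i))))
  (Hbeta : is_cf_value (beta_pq a t ns) beta) :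
  (forall r0 r1 r2 : Q,
      Q2R r0 + Q2R r1 * alpha + Q2R r2 * beta = 0 ->
      (r0 == 0)%Q /\ (r1 == 0)%Q /\ (r2 == 0)%Q)
  /\ (forall N : nat, exists q : nat, (N < q)%nat /\
        INR q * dist_int (INR q * alpha) * dist_int (INR q * beta)
          <= 1 / Rpower (INR q) (1 - eps))
  /\ (forall q : nat, (1 <= q)%nat ->
        0 <= INR q * dist_int (INR q * alpha) * dist_int (INR q * beta))
  /\ (forall e : R, 0 < e -> exists q : nat, (1 <= q)%nat /\
        INR q * dist_int (INR q * alpha) * dist_int (INR q * beta) < e).
Proof.
  pose proof (part2 M eps a t ns alpha beta HM Heps Ha Halpha Ht Hn Hliminf Hbeta) as P2.
  split; [|split; [exact P2|split]].
  - intros [n0 d0] [n1 d1] [n2 d2] Heq. unfold Q2R in Heq. simpl in Heq.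
    assert (H0 : 0 < IZR (Z.pos d0)) by (apply IZR_lt; lia).
    assert (H1 : 0 < IZR (Z.pos d1)) by (apply IZR_lt; lia).
    assert (H2 : 0 < IZR (Z.pos d2)) by (apply IZR_lt; lia).
    destruct (indep_Z M eps a t ns alpha beta HM Heps Ha Halpha Ht Hn Hliminf Hbeta
      (n0 * Z.pos d1 * Z.pos d2) (n1 * Z.pos d0 * Z.pos d2) (n2 * Z.pos d0 * Z.pos d1)) as (E0 & E1 & E2).
    { rewrite !mult_IZR.
      replace (IZR n0 * IZR (Z.pos d1) * IZR (Z.pos d2) + IZR n1 * IZR (Z.pos d0) * IZR (Z.pos d2) * alpha +
        IZR n2 * IZR (Z.pos d0) * IZR (Z.pos d1) * beta) with
        (IZR (Z.pos d0) * IZR (Z.pos d1) * IZR (Z.pos d2) *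
         (IZR n0 * / IZR (Z.pos d0) + IZR n1 * / IZR (Z.pos d1) * alpha + IZR n2 * / IZR (Z.pos d2) * beta))
        by (field; lra).
      rewrite Heq. ring. }
    apply Z3 in E0; try lia. apply Z3 in E1; try lia. apply Z3 in E2; try lia.
    subst. unfold Qeq. simpl. repeat split.
  - intros q _. pose proof (pos_INR q). pose proof (dist_int_nonneg (INR q * alpha)).
    pose proof (dist_int_nonneg (INR q * beta)). apply Rmult_le_pos; [apply Rmult_le_pos|]; lra.
  - intros e He.
    set (K := ln (/ e) / (1 - eps)).
    destruct (INR_unbounded (exp K)) as [N HN].
    destruct (P2 N) as [q [Hq Hb]].
    exists q. split; [lia|].
    assert (HqK : exp K < INR q).
    { apply lt_INR in Hq. lra. }
    assert (Hq0 : 0 < INR q) by (pose proof (exp_pos K); lra).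
    assert (Hl : K < ln (INR q)).
    { rewrite <- (ln_exp K). apply ln_increasing; auto. apply exp_pos. }
    assert (Hl2 : ln (/ e) < (1 - eps) * ln (INR q)).
    { unfold K in Hl. apply (Rmult_lt_compat_l (1 - eps)) in Hl; [|lra].
      replace ((1 - eps) * (ln (/ e) / (1 - eps))) with (ln (/ e)) in Hl by (field; lra). exact Hl. }
    assert (Hr : / e < Rpower (INR q) (1 - eps)).
    { unfold Rpower. rewrite <- (exp_ln (/ e)) by (apply Rinv_0_lt_compat; lra).
      apply exp_increasing. exact Hl2. }
    eapply Rle_lt_trans; [exact Hb|].
    assert (0 < / e) by (apply Rinv_0_lt_compat; lra).
    unfold Rdiv. rewrite Rmult_1_l. rewrite <- (Rinv_inv e). apply Rinv_lt_contravar; [|exact Hr].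
    apply Rmult_lt_0_compat; lra.
Qed.
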